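(* Let $U\supseteq U'$ and $V$ be finitely generated free abelian groups and let $f:U\times V\to\mathbb{Z}$ be a bilinear function whose restriction to $U'\times V$ has rank at least two. Then for every $u\in U$ the set $f(u+U',V)=\{f(u+u',v)\mid u'\in U',v\in V\}\subseteq\mathbb{Z}$ is a subgroup of $\mathbb{Z}$ containing $f(U',V)$.
   Context: The rank of a bilinear function $U'\times V\to\mathbb{Z}$ is the rank of its matrix with respect to bases of $U'$ and $V$. *)

(* Defs.v *)
From HB Require Import structures.
From mathcomp Require Import all_boot all_order all_algebra.
Set Implicit Arguments. Unset Strict Implicit. Unset Printing Implicit Defensive.
Import Order.TTheory GRing.Theory Num.Theory.
Local Open Scope ring_scope.

(* U = Z^n (row vectors), V = Z^m (row vectors). *)

Definition bilinearZ (n m : nat) (f : 'rV[int]_n -> 'rV[int]_m -> int) : Prop :=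
  (forall v, forall u1 u2, f (u1 + u2) v = f u1 v + f u2 v) /\
  (forall u, forall v1 v2, f u (v1 + v2) = f u v1 + f u v2).

(* The subgroup U' of U spanned by the rows of B : 'M[int]_(k, n). *)
Definition span_rows (k n : nat) (B : 'M[int]_(k, n)) : 'rV[int]_n -> Prop :=
  fun x => exists c : 'rV[int]_k, x = c *m B.

Definition int_row_free (k n : nat) (B : 'M[int]_(k, n)) : Prop :=
  forall c : 'rV[int]_k, c *m B = 0 -> c = 0.

Definition restr_matrix (k n m : nat) (f : 'rV[int]_n -> 'rV[int]_m -> int)
  (B : 'M[int]_(k, n)) : 'M[int]_(k, m) :=
  \matrix_(i < k, j < m) f (row i B) (delta_mx 0 j).

Definition int_rank (k m : nat) (A : 'M[int]_(k, m)) : nat :=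
  \rank (map_mx (fun z : int => z%:~R : rat) A).

Definition is_subgroupZ (S : int -> Prop) : Prop :=
  S 0 /\ (forall x y, S x -> S y -> S (x - y)).

(* Main.v *)
Require Import Defs.
From HB Require Import structures.
From mathcomp Require Import all_boot all_order all_algebra.
Import Order.TTheory GRing.Theory Num.Theory.
Local Open Scope ring_scope.

Lemma dvdz_natP (p : nat) (z : int) : (p%:Z %| z)%Z = (p %| `|z|)%N.
Proof. by rewrite dvdzE absz_nat. Qed.

Lemma L3 (a d N : int) : N != 0 ->
  (forall p, prime p -> (p%:Z %| a)%Z -> (p%:Z %| d)%Z -> (p%:Z %| N)%Z -> False) ->
  exists x : int, coprimez (a + x * d) N.
Proof.
move=> N0 H.
pose x : nat := (\prod_(p <- primes `|N| | ~~ (p %| `|a|)%N) p)%N.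
exists x%:Z.
rewrite /coprimez /gcdz; apply/eqP; congr Posz.
set G := gcdn _ _.
have G0 : (0 < G)%N by rewrite gcdn_gt0 orbC absz_gt0 N0.
case: (ltngtP G 1) => // [|G1]; first by rewrite ltnS leqn0 => /eqP G00; rewrite G00 in G0.
exfalso; have pp := pdiv_prime G1.
have pG := pdiv_dvd G.
have pN : (pdiv G %| `|N|)%N by apply: dvdn_trans pG (dvdn_gcdr _ _).
have pA : (pdiv G %| `|(a + x%:Z * d)%R|)%N by apply: dvdn_trans pG (dvdn_gcdl _ _).
set p := pdiv G in pp pG pN pA.
rewrite -dvdz_natP in pN.
have {}pA : (p%:Z %| a + x%:Z * d)%Z by rewrite dvdz_natP.
case pa: (p %| `|a|)%N.
- have px : ~~ (p %| x)%N.
    rewrite /x Euclid_dvd_prod //.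
    have : all prime (primes `|N|).
      by apply/allP => q; rewrite mem_primes => /andP[].
    elim: (primes _) => [|q s IH]; first by rewrite big_nil.
    rewrite big_cons /= => /andP [qprime /IH {}IH]; case: ifP => // qa.
    rewrite negb_or IH andbT.
    apply/negP => pq.
    by move: pq; rewrite dvdn_prime2 // => /eqP pq; rewrite -pq pa in qa.
  apply: (H p pp) => //.
  have : (p%:Z %| x%:Z * d)%Z.
    have -> : x%:Z * d = (a + x%:Z * d) - a by rewrite addrC addKr.
    by rewrite rpredB // dvdz_natP.
  rewrite !dvdz_natP abszM Euclid_dvdM // absz_nat (negbTE px) /=.
  done.
- have px : (p %| x)%N.
    rewrite /x Euclid_dvd_prod //.
    have : p \in primes `|N| by rewrite mem_primes pp absz_gt0 N0 -dvdz_natP.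
    elim: (primes _) => [|q s IH]; first by [].
    rewrite inE big_cons => /orP [/eqP<-|/IH->]; first by rewrite pa dvdnn.
    by case: ifP => //; rewrite orbT.
  have : (p%:Z %| (a + x%:Z * d) - x%:Z * d)%Z.
    by rewrite rpredB // dvdz_mulr // dvdz_natP absz_nat.
  by rewrite addrK dvdz_natP pa.
Qed.


Lemma L2 (a d N : int) : N != 0 -> exists x : int, (gcdz (a + x * d) N %| d)%Z.
Proof.
move=> N0.
set g0 := gcdz (gcdz a d) N.
have g00 : g0 != 0 by rewrite gcdz_eq0 negb_and N0 orbT.
have gad : (g0 %| gcdz a d)%Z by apply: dvdz_gcdl.
have ga : (g0 %| a)%Z by move: gad; rewrite dvdz_gcd => /andP[].
have gd : (g0 %| d)%Z by move: gad; rewrite dvdz_gcd => /andP[].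
have gN : (g0 %| N)%Z by apply: dvdz_gcdr.
set a' := (a %/ g0)%Z; set d' := (d %/ g0)%Z; set N' := (N %/ g0)%Z.
have ea : a = a' * g0 by rewrite divzK.
have ed : d = d' * g0 by rewrite divzK.
have eN : N = N' * g0 by rewrite divzK.
have N'0 : N' != 0 by apply: contra N0; rewrite eN => /eqP->; rewrite mul0r.
have [x cx] : exists x : int, coprimez (a' + x * d') N'.
  apply: L3 => // p pp pa pd pn.
  have h1 : (p%:Z * g0 %| a)%Z by rewrite ea dvdz_mul2r.
  have h2 : (p%:Z * g0 %| d)%Z by rewrite ed dvdz_mul2r.
  have h3 : (p%:Z * g0 %| N)%Z by rewrite eN dvdz_mul2r.
  have : (p%:Z * g0 %| gcdz (gcdz a d) N)%Z by rewrite !dvdz_gcd h1 h2 h3.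
  rewrite -/g0.
  rewrite -[X in (_ %| X)%Z -> _]mul1r dvdz_mul2r // dvdz1 absz_nat => /eqP p1.
  by rewrite p1 in pp.
exists x.
have -> : gcdz (a + x * d) N = g0.
  rewrite ea ed eN mulrA -mulrDl -mulz_gcdl.
  move: cx; rewrite /coprimez => /eqP->.
  rewrite mul1r gez0_abs //.
  by rewrite /g0 /gcdz.
Qed.


Lemma key (a0 a1 h d0 d1 : int) : d1 != 0 -> (d0 %| d1)%Z ->
  exists x y p q r g : int,
    p * (a0 + x * d0) + q * (a1 + y * d1) + r * h = g /\
    [/\ (g %| a0)%Z, (g %| d0)%Z, (g %| a1)%Z & (g %| h)%Z].
Proof.
move=> d10 d01.
pose y : int := if a1 == 0 then 1 else 0.
set N := a1 + y * d1.
have N0 : N != 0.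
  rewrite /N /y; case: (a1 =P 0) => [->|/eqP a10]; first by rewrite add0r mul1r.
  by rewrite mul0r addr0.
set N' := gcdz N h.
have N'0 : N' != 0 by rewrite gcdz_eq0 negb_and N0.
have [x Hx] := @L2 a0 d0 N' N'0.
set T := gcdz (a0 + x * d0) N' in Hx.
have [u [v euv]] := Bezoutz (a0 + x * d0) N'.
have [u' [v' euv']] := Bezoutz N h.
exists x, y, u, (v * u'), (v * v'), T; split.
  by rewrite /T -euv /N' -euv' [v * (_ + _)]mulrDr !mulrA addrA.
have TN' : (T %| N')%Z by apply: dvdz_gcdr.
have TN : (T %| N)%Z by apply: dvdz_trans TN' (dvdz_gcdl _ _).
have Th : (T %| h)%Z by apply: dvdz_trans TN' (dvdz_gcdr _ _).
have TA : (T %| a0 + x * d0)%Z by apply: dvdz_gcdl.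
have Td1 : (T %| d1)%Z by apply: dvdz_trans Hx d01.
split => //.
- have -> : a0 = (a0 + x * d0) - x * d0 by rewrite addrK.
  by rewrite rpredB // dvdz_mull.
- have -> : a1 = N - y * d1 by rewrite addrK.
  by rewrite rpredB // dvdz_mull.
Qed.


Lemma vbez p (b : 'I_p -> int) : exists (g : int) (w : 'I_p -> int),
  \sum_j b j * w j = g /\ forall j, (g %| b j)%Z.
Proof.
elim: p b => [|p IH] b.
  by exists 0, (fun _ => 0); split => [|[]//]; rewrite big_ord0.
have [g' [w' [e' d']]] := IH (fun j => b (lift ord0 j)).
have [u [v euv]] := Bezoutz (b ord0) g'.
exists (gcdz (b ord0) g').
exists (fun i => match unlift ord0 i with Some j => v * w' j | None => u end).
split.
  rewrite big_ord_recl unlift_none -euv mulrC; congr (_ + _).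
  rewrite -e' mulr_sumr; apply: eq_bigr => j _.
  by rewrite liftK mulrCA.
move=> j; case: (unliftP ord0 j) => [k ->|->]; last exact: dvdz_gcdl.
exact: dvdz_trans (dvdz_gcdr _ _) (d' k).
Qed.

Set Implicit Arguments. Unset Strict Implicit. Unset Printing Implicit Defensive.

Definition qmap k m (A : 'M[int]_(k, m)) : 'M[rat]_(k, m) := map_mx (fun z : int => z%:~R : rat) A.

Lemma qmapM k m p (A : 'M[int]_(k, m)) (B : 'M[int]_(m, p)) : qmap (A *m B) = qmap A *m qmap B.
Proof. exact: map_mxM. Qed.

Lemma qmap_unit k (L : 'M[int]_k) : L \in unitmx -> qmap L \in unitmx.
Proof.
move=> Lu; have := mulmxV Lu.
move/(congr1 (@qmap k k)); rewrite qmapM.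
have -> : qmap (1%:M : 'M[int]_k) = 1%:M by apply: map_mx1.
by case/mulmx1_unit.
Qed.

Lemma rank_unit_mul k m (L : 'M[int]_k) (A : 'M[int]_(k, m)) (R : 'M[int]_m) :
  L \in unitmx -> R \in unitmx -> \rank (qmap (L *m A *m R)) = \rank (qmap A).
Proof.
move=> Lu Ru; rewrite !qmapM mxrankMfree ?row_free_unit ?qmap_unit //.
rewrite -mxrank_tr trmx_mul mxrankMfree ?mxrank_tr // row_free_unit unitmx_tr.
exact: qmap_unit.
Qed.


Lemma dvd_mulmxl (g : int) k m p (A : 'M[int]_(k, m)) (B : 'M[int]_(m, p)) :
  (forall i j, (g %| A i j)%Z) -> forall i j, (g %| (A *m B) i j)%Z.
Proof. by move=> H i j; rewrite mxE; apply: rpred_sum => l _; apply: dvdz_mulr. Qed.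

Lemma dvd_mulmxr (g : int) k m p (A : 'M[int]_(k, m)) (B : 'M[int]_(m, p)) :
  (forall i j, (g %| B i j)%Z) -> forall i j, (g %| (A *m B) i j)%Z.
Proof. by move=> H i j; rewrite mxE; apply: rpred_sum => l _; apply: dvdz_mull. Qed.

Lemma mx_key k m (al : 'rV[int]_m) (M : 'M[int]_(k,m)) :
  (2 <= \rank (qmap M))%N ->
  exists (g : int) (c : 'rV[int]_k) (v : 'cV[int]_m),
    (al + c *m M) *m v = g%:M /\ (forall j, (g %| al ord0 j)%Z) /\ (forall i j, (g %| M i j)%Z).
Proof.
case: k M => [|[|k]] M rk; try by move: (leq_trans rk (rank_leq_row _)).
case: m al M rk => [|[|m]] al M rk; try by move: (leq_trans rk (rank_leq_col _)).
have [L Lu [R Ru [d sd eM]]] := int_Smith_normal_form M.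
set D := \matrix_(i, j) _ in eM.
have DE : forall i j, D i j = d`_i *+ (i == j :> nat) by move=> i j; rewrite mxE.
have dd : forall i, (d`_0 %| d`_i)%Z.
  move=> i; case: (ltnP i (size d)) => hi; last by rewrite (nth_default _ hi) dvdz0.
  apply: (sorted_leq_nth (fun y x z h1 h2 => dvdz_trans h1 h2) dvdzz) => //.
  by rewrite inE (leq_ltn_trans _ hi).
have d10 : d`_1 != 0.
  apply/negP => /eqP d10.
  have : (\rank (qmap D) <= 1)%N.
    have -> : qmap D = (d`_0)%:~R *: delta_mx 0 0.
      apply/matrixP => i j; rewrite !mxE.
      case: (unliftP 0 i) => [i' ->|->]; case: (unliftP 0 j) => [j' ->|->] //=;
        rewrite ?mulr0 ?mulr1 //.
      case: eqP => [_|]; rewrite ?mulr0n ?mulr1n //.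
      have : (d`_1 %| d`_(bump 0 i'))%Z.
        case: (ltnP (bump 0 i') (size d)) => hi; last by rewrite (nth_default _ hi) dvdz0.
        apply: (sorted_leq_nth (fun y x z h1 h2 => dvdz_trans h1 h2) dvdzz) => //.
        by rewrite inE (leq_ltn_trans _ hi).
      by rewrite d10 dvd0z => /eqP->.
    by apply: leq_trans (mxrankS (scalemx_sub _ (submx_refl _))) _; rewrite mxrank_delta.
  by rewrite -(rank_unit_mul _ Lu Ru) -eM leqNgt rk.
set a := al *m invmx R.
have [h [wr [eh dh]]] := @vbez m (fun j : 'I_m => a 0 (lift ord0 (lift ord0 j))).
have [x [y [p [q [r [g [eg [ga0 gd0 ga1 gh]]]]]]]] :=
  key (a 0 0) (a 0 1) h (d`_0) (d`_1) d10 (dd 1%N).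
pose c' : 'rV[int]_k.+2 := x *: delta_mx 0 0 + y *: delta_mx 0 1.
pose w : 'cV[int]_m.+2 := \col_j (if unlift ord0 j is Some j1 then
   (if unlift ord0 j1 is Some j2 then r * wr j2 else q) else p).
exists g, (c' *m invmx L), (invmx R *m w).
have E : (al + c' *m invmx L *m M) *m (invmx R *m w) = (a + c' *m D) *m w.
  rewrite eM mulmxDl mulmxDl; congr (_ + _); first by rewrite mulmxA.
  rewrite !mulmxA -[c' *m _ *m L]mulmxA mulVmx // mulmx1.
  by rewrite -[_ *m R *m invmx R]mulmxA mulmxV // mulmx1.
have cD : forall j, (c' *m D) 0 j = x * D 0 j + y * D 1 j.
  move=> j; rewrite mulmxDl -!scalemxAl -!rowE !mxE.
  by [].
have bE : forall j, (a + c' *m D) 0 j = a 0 j + x * D 0 j + y * D 1 j.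
  by move=> j; rewrite [LHS]mxE cD addrA.
have w0 : w 0 0 = p by rewrite mxE unlift_none.
have w1 : w (lift 0 0) 0 = q by rewrite mxE liftK unlift_none.
have w2 : forall j, w (lift 0 (lift 0 j)) 0 = r * wr j by move=> j; rewrite mxE !liftK.
have e1 : (lift ord0 ord0 : 'I_m.+2) = 1 by apply: val_inj; rewrite /= modn_small.
split.
  rewrite E; apply/matrixP => i j; rewrite !ord1 [in RHS]mxE /= mulr1n mxE.
  rewrite big_ord_recl big_ord_recl w0 w1.
  under eq_bigr do rewrite w2 bE !DE /= mulr0n !mulr0 !addr0.
  rewrite !bE !DE /= (@modn_small 1) // e1 !mulr0n !mulr1n !mulr0 !addr0.
  rewrite -eg -eh mulr_sumr addrA; congr (_ + _ + _); rewrite ?(mulrC p) ?(mulrC q) //.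
  by apply: eq_bigr => i0 _; rewrite mulrCA mulrC.
have ga : forall i j, (g %| a i j)%Z.
  move=> i j; rewrite (ord1 i).
  case: (unliftP 0 j) => [j1 ->|->] //; case: (unliftP 0 j1) => [j2 ->|->]; last by rewrite e1.
  exact: dvdz_trans gh (dh j2).
have gD : forall i j, (g %| D i j)%Z.
  by move=> i j; rewrite DE rpredMn // (dvdz_trans gd0 (dd i)).
split.
  have -> : al = a *m R by rewrite /a -mulmxA mulVmx // mulmx1.
  by move=> j; apply: dvd_mulmxl.
by rewrite eM => i j; apply: dvd_mulmxl; apply: dvd_mulmxr.
Qed.


Section Add.
Variables (p : nat) (g : 'rV[int]_p -> int).
Hypothesis hg : forall x y, g (x + y) = g x + g y.

Lemma g0 : g 0 = 0.
Proof. have h := hg 0 0; rewrite addr0 in h. by apply: (addrI (g 0)); rewrite addr0 -h. Qed.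

Lemma gN x : g (- x) = - g x.
Proof. by apply: (addrI (g x)); rewrite -hg !subrr g0. Qed.

Lemma gMn x n : g (x *+ n) = g x *+ n.
Proof. by elim: n => [|n IH]; rewrite ?mulr0n ?g0 // !mulrS hg IH. Qed.

Lemma gZ (z : int) x : g (z *: x) = z * g x.
Proof.
have -> : z *: x = x *~ z by rewrite -scaler_int intz.
case: z => n.
  by change (x *~ Posz n) with (x *+ n); rewrite gMn -mulr_natl natz.
change (x *~ Negz n) with (- (x *+ n.+1)).
by rewrite NegzE gN gMn -mulr_natl natz mulNr.
Qed.

Lemma gsum q (F : 'I_q -> 'rV[int]_p) : g (\sum_i F i) = \sum_i g (F i).
Proof. exact: (big_morph g hg g0). Qed.
End Add.

Local Open Scope ring_scope.

Theorem mainTheorem11 (n m k : nat) (f : 'rV[int]_n -> 'rV[int]_m -> int)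
  (B : 'M[int]_(k, n)) :
  bilinearZ f ->
  int_row_free B ->
  (2 <= int_rank (restr_matrix f B))%N ->
  forall u : 'rV[int]_n,
    let S := fun z : int =>
      exists u' v, span_rows B u' /\ z = f (u + u') v in
    is_subgroupZ S /\
    (forall u' v, span_rows B u' -> S (f u' v)).
Proof.
move=> [hl hr] _ rk u S.
set M := restr_matrix f B in rk.
have valE : forall u0 c v, f (u0 + c *m B) v =
    \sum_j ((\row_j f u0 (delta_mx 0 j)) + c *m M) 0 j * v 0 j.
  move=> u0 c v.
  rewrite {1}(row_sum_delta v) (gsum (hr _)); apply: eq_bigr => j _.
  rewrite (gZ (hr _)) mulrC; congr (_ * _).
  rewrite hl mulmx_sum_row (gsum (g := fun x => f x _) (hl _)).
  rewrite !mxE; congr (_ + _); apply: eq_bigr => i _.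
  by rewrite (gZ (g := fun x => f x _) (hl _)) !mxE.
have [g [c [v [ev [gal gM]]]]] := mx_key (\row_j f u (delta_mx 0 j)) rk.
have Sg : forall s, S (s * g).
  move=> s; exists (c *m B), (s *: v^T); split; first by exists c.
  rewrite (gZ (hr _)) valE; congr (_ * _).
  have := congr1 (fun A : 'M[int]_1 => A ord0 ord0) ev; rewrite !mxE /= mulr1n => <-.
  by apply: eq_bigr => j _; rewrite !mxE.
have gdiv : forall u0 (c' : 'rV[int]_k) (v' : 'rV[int]_m), (forall j, (g %| f u0 (delta_mx ord0 j))%Z) ->
    (g %| f (u0 + c' *m B) v')%Z.
  move=> u0 c' v' hu0; rewrite valE; apply: rpred_sum => j _; apply: dvdz_mulr.
  rewrite mxE; apply: rpredD; first by rewrite mxE.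
  exact: dvd_mulmxr.
have Sdvd : forall z, (g %| z)%Z -> S z by move=> z /divzK <-; apply: Sg.
split.
  split; first by rewrite -(mul0r g); apply: Sg.
  move=> x y [u1 [v1 [[c1 ->] ->]]] [u2 [v2 [[c2 ->] ->]]].
  apply: Sdvd; apply: rpredB; apply: gdiv => j; have := gal j; by rewrite mxE.
move=> u' v' [c' ->]; apply: Sdvd.
rewrite -[c' *m B]add0r; apply: gdiv => j.
by rewrite (g0 (hl _)) dvdz0.
Qed.
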